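(* There exist ten IGL environments $E_0,\dots,E_9$ with the following properties. All share the same context space $\mathcal X$, context distribution $d_0$, action set $\mathcal A=\{0,\dots,9\}$ and reward: there is a labeling $\ell:\mathcal X\to\{0,\dots,9\}$ with $\Pr_{x\sim d_0}[\ell(x)=j]=1/10$ for each $j$, and $r=\mathbf 1\{a=\ell(x)\}$. The feedback space is a disjoint union $\mathcal Y=\mathcal Y_0\sqcup\dots\sqcup\mathcal Y_9$ with a probability distribution $\nu_j$ on each $\mathcal Y_j$; in environment $E_i$, $y\mid r=1\sim\nu_i$ and $y\mid r=0\sim\frac19\sum_{j\ne i}\nu_j$, independently of $(x,a)$. Then: (i) each $E_i$ satisfies Assumption 1, and, with $\Pi$ the class of all policies, $\pi_u$ the uniform policy and any decoder class $\Psi$ containing the indicators $\mathbf 1_{\mathcal Y_0},\dots,\mathbf 1_{\mathcal Y_9}$, Assumption 2 holds (e.g. with $\eta=0.8$); (ii) when actions are chosen by $\pi_u$, the marginal distribution of $y$ is the same ($\frac1{10}\sum_j\nu_j$) in all ten environments; (iii) for every decoder $\psi:\mathcal Y\to[0,1]$ (the same decoder being used in all environments, as any method depending only on the marginal law of $y$ must do), there exists $i\in\{0,\dots,9\}$ and a policy $\hat\pi$ that maximizes the decoded reward $V_i(\pi,\psi)$ over all policies in environment $E_i$ and satisfies $V_i(\hat\pi)=0$, while $\max_\pi V_i(\pi)=1$; hence $V_i(\pi^\star)-V_i(\hat\pi)=\Omega(1)$.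
   Context: IGL setting: contexts $x\sim d_0$, finite action set, latent reward $r\in\{0,1\}$ and feedback $y$ drawn given $(x,a)$; for environment $E_i$, $V_i(\pi)=\mathbb E_{x\sim d_0,a\sim\pi(\cdot|x)}[r]$ and $V_i(\pi,\psi)=\mathbb E_{x\sim d_0,a\sim\pi(\cdot|x)}[\psi(y)]$ computed in $E_i$. Assumption 1 (conditional independence): there are distributions $Q_0,Q_1$ on $\mathcal Y$ with $y\mid(x,a,r)\sim Q_r$; $\Delta\psi:=\mathbb E_{Q_1}[\psi]-\mathbb E_{Q_0}[\psi]$. Assumption 2 (identifiability): with $\pi^\star\in\arg\max_{\pi\in\Pi}V(\pi)$ and $\psi^\star\in\arg\max_{\psi\in\Psi}\Delta\psi$, there is $\eta>0$ with $(V(\pi^\star)-V(\pi_u))\Delta\psi^\star\ge V(\pi_u)+\eta$, where $\pi_u$ is the uniform policy. *)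

(* Defs.v *)
From mathcomp Require Import all_boot all_order all_algebra.
Set Implicit Arguments. Unset Strict Implicit. Unset Printing Implicit Defensive.
Import Order.TTheory GRing.Theory Num.Theory.
Local Open Scope ring_scope.

Section IGL.
Variables (R : realFieldType) (X A Y : finType).

(* A (finite) IGL environment:
   ctx x        = d_0(x)
   rwd x a      = P[r = 1 | x, a]
   fbk x a r y  = P[y | x, a, r]                                      *)
Record igl_env := IGLEnv {
  ctx : X -> R;
  rwd : X -> A -> R;
  fbk : X -> A -> bool -> Y -> R }.

Definition is_dist (T : finType) (p : T -> R) :=
  (forall t, 0 <= p t) /\ \sum_t p t = 1.

Definition well_formed (E : igl_env) :=
  [/\ is_dist (ctx E), (forall x a, 0 <= rwd E x a <= 1)
    & forall x a r, is_dist (fbk E x a r)].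

Definition is_policy (pi : X -> A -> R) := forall x, is_dist (pi x).

Definition unif_policy : X -> A -> R := fun _ _ => (#|A|%:R)^-1.

Definition rprob (E : igl_env) x a (r : bool) : R :=
  if r then rwd E x a else 1 - rwd E x a.

Definition value (E : igl_env) (pi : X -> A -> R) : R :=
  \sum_x ctx E x * \sum_a pi x a * rwd E x a.

Definition dvalue (E : igl_env) (pi : X -> A -> R) (psi : Y -> R) : R :=
  \sum_x ctx E x * \sum_a pi x a *
    \sum_(r : bool) rprob E x a r * \sum_y fbk E x a r y * psi y.

Definition ymarginal (E : igl_env) (pi : X -> A -> R) (y : Y) : R :=
  \sum_x ctx E x * \sum_a pi x a *
    \sum_(r : bool) rprob E x a r * fbk E x a r y.

Definition assumption1 (E : igl_env) (Q : bool -> Y -> R) :=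
  (forall r, is_dist (Q r)) /\
  (forall x a r y, 0 < ctx E x -> 0 < rprob E x a r -> fbk E x a r y = Q r y).

Definition Delta (Q : bool -> Y -> R) (psi : Y -> R) : R :=
  \sum_y Q true y * psi y - \sum_y Q false y * psi y.

Definition assumption2_with (E : igl_env) (Q : bool -> Y -> R)
    (Psi : (Y -> R) -> Prop) (eta : R) :=
  forall pistar, is_policy pistar ->
    (forall pi, is_policy pi -> value E pi <= value E pistar) ->
  forall psistar, Psi psistar ->
    (forall psi, Psi psi -> Delta Q psi <= Delta Q psistar) ->
  value E unif_policy + eta <=
    (value E pistar - value E unif_policy) * Delta Q psistar.

Definition assumption2 (E : igl_env) (Q : bool -> Y -> R)
    (Psi : (Y -> R) -> Prop) :=
  exists eta, 0 < eta /\ assumption2_with E Q Psi eta.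

End IGL.

Definition mk_env (R : realFieldType) (X Y : finType) (d0 : X -> R)
    (ell : X -> 'I_10) (nu : 'I_10 -> Y -> R) (i : 'I_10)
    : igl_env R X (ordinal 10) Y :=
  IGLEnv d0 (fun x a => (a == ell x)%:R)
    (fun x a (r : bool) y =>
       if r then nu i y else (9%:R)^-1 * \sum_(j < 10 | j != i) nu j y).

(* indicator of the block Y_j of the disjoint union *)
Definition block_ind (R : realFieldType) (Y : finType) (blk : Y -> 'I_10)
    (j : 'I_10) : Y -> R := fun y => (blk y == j)%:R.

(* Main.v *)
Require Import Defs.
From mathcomp Require Import all_boot all_order all_algebra.
From mathcomp Require Import ring lra.
Import Order.TTheory GRing.Theory Num.Theory.
Local Open Scope ring_scope.

Section Helpers.
Variable R : realFieldType.
Local Notation I := ('I_10).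

Lemma sumIl (k : I) (f : I -> R) : \sum_a (a == k)%:R * f a = f k.
Proof.
rewrite (bigD1 k) //= eqxx mul1r big1 ?addr0 // => a /negbTE ->.
by rewrite mul0r.
Qed.

Lemma sumIr (k : I) (f : I -> R) : \sum_a f a * (a == k)%:R = f k.
Proof. by under eq_bigr => a _ do rewrite mulrC; rewrite sumIl. Qed.

Lemma sumI1 (k : I) : \sum_a (a == k)%:R = 1 :> R.
Proof. by under eq_bigr => a _ do rewrite -[_%:R]mulr1; rewrite sumIl. Qed.

Lemma sumI1r (k : I) : \sum_a (k == a)%:R = 1 :> R.
Proof. by under eq_bigr => a _ do rewrite eq_sym; rewrite sumI1. Qed.

Lemma sumne (i y : I) :
  \sum_(j < 10 | j != i) (y == j)%:R = (y != i)%:R :> R.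
Proof.
case: (eqVneq y i) => [->|nyi].
  by rewrite big1 // => j /negbTE; rewrite eq_sym => ->.
rewrite (bigD1 y) //= eqxx big1 ?addr0 // => j /andP[_ /negbTE].
by rewrite eq_sym => ->.
Qed.

Lemma sumNI (i : I) : \sum_(y < 10) (y != i)%:R = 9%:R :> R.
Proof.
under eq_bigr => y _ do rewrite -[(y != i)%:R]/((~~ (y == i))%:R).
have -> : \sum_(y < 10) (~~ (y == i))%:R = \sum_(y < 10) (1 - (y == i)%:R) :> R.
  by apply: eq_bigr => y _; case: (y == i); rewrite ?subr0 ?subrr.
rewrite sumrB sumI1 sumr_const card_ord.
by rewrite -[1 *+ 10]/(10%:R) (_ : 10%:R = 9%:R + 1 :> R) ?addrK // -natr1.
Qed.

Lemma invmuln (n : nat) : (n%:R : R) != 0 -> ((n%:R : R)^-1) *+ n = 1.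
Proof. by move=> h; rewrite -(mulr_natr (n%:R)^-1 n) mulVf. Qed.

End Helpers.

Theorem theorem3 (R : realFieldType) :
  exists (X Y : finType) (d0 : X -> R) (ell : X -> 'I_10)
         (blk : Y -> 'I_10) (nu : 'I_10 -> Y -> R),
  [/\ (* common context distribution, balanced labeling *)
      [/\ is_dist d0,
           (forall j : 'I_10, \sum_(x | ell x == j) d0 x = (10%:R)^-1) &
      (* nu_j is a probability distribution on the block Y_j *)
           (forall j : 'I_10, is_dist (nu j) /\ (forall y, nu j y != 0 -> blk y = j))],
      (* each E_i is a well-formed IGL environment *)
      (forall i : 'I_10, well_formed (mk_env d0 ell nu i)),
      (* (i) Assumptions 1 and 2 *)
      (forall i : 'I_10, exists Q : bool -> Y -> R,
         assumption1 (mk_env d0 ell nu i) Q /\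
         (forall Psi : (Y -> R) -> Prop,
            (forall j : 'I_10, Psi (block_ind R blk j)) ->
            assumption2 (mk_env d0 ell nu i) Q Psi /\
            assumption2_with (mk_env d0 ell nu i) Q Psi (4%:R / 5%:R))),
      (* (ii) same marginal of y under the uniform policy *)
      (forall (i : 'I_10) (y : Y),
         ymarginal (mk_env d0 ell nu i) (@unif_policy R X (ordinal 10)) y
         = (10%:R)^-1 * \sum_(j < 10) nu j y) &
      (* (iii) every [0,1]-valued decoder fails in some environment *)
      (forall psi : Y -> R, (forall y, 0 <= psi y <= 1) ->
         exists (i : 'I_10) (pihat : X -> 'I_10 -> R),
           [/\ is_policy pihat,
               (forall pi, is_policy pi ->
                  dvalue (mk_env d0 ell nu i) pi psi
                  <= dvalue (mk_env d0 ell nu i) pihat psi),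
               value (mk_env d0 ell nu i) pihat = 0,
               (exists pistar, is_policy pistar /\
                  value (mk_env d0 ell nu i) pistar = 1) &
               (forall pi, is_policy pi -> value (mk_env d0 ell nu i) pi <= 1)])].
Proof.
pose d0 : 'I_10 -> R := fun _ => (10%:R)^-1.
pose nu : 'I_10 -> 'I_10 -> R := fun j y => (y == j)%:R.
exists 'I_10, 'I_10, d0, id, id, nu.
have h10 : (10%:R : R) != 0 by rewrite pnatr_eq0.
have h9 : (9%:R : R) != 0 by rewrite pnatr_eq0.
have d0sum : \sum_(x < 10) d0 x = 1.
  by rewrite sumr_const card_ord invmuln.
have distd0 : is_dist d0 by split=> //= t; rewrite /d0 invr_ge0 ler0n.
have fbkF : forall i y, (9%:R)^-1 * \sum_(j < 10 | j != i) nu j y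
    = (9%:R)^-1 * (y != i)%:R by move=> i y; rewrite /nu sumne.
have distnu : forall j, is_dist (nu j).
  by move=> j; split=> [t|]; rewrite /nu ?ler0n // sumI1.
have wf : forall i, well_formed (mk_env d0 id nu i).
  move=> i; split=> //= [x a|x a r]; first by case: (_ == _); rewrite ?lexx ?ler01.
  case: r => //; split=> [t|] /=.
    by rewrite fbkF mulr_ge0 ?invr_ge0 ?ler0n.
  by under eq_bigr => t _ do rewrite fbkF; rewrite -mulr_sumr sumNI mulVf.
have valE : forall i pi, value (mk_env d0 id nu i) pi = \sum_x (10%:R)^-1 * pi x x.
  by move=> i pi; apply: eq_bigr => x _ /=; rewrite sumIr.
pose pi0 : 'I_10 -> 'I_10 -> R := fun x a => (a == x)%:R.
have pol0 : is_policy pi0 by move=> x; split=> [t|]; rewrite /pi0 ?ler0n // sumI1.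
have val0 : forall i, value (mk_env d0 id nu i) pi0 = 1.
  by move=> i; rewrite valE; under eq_bigr => x _ do rewrite /pi0 eqxx mulr1; exact: d0sum.
have valu : forall i, value (mk_env d0 id nu i) (@unif_policy R 'I_10 'I_10) = (10%:R)^-1.
  move=> i; rewrite valE /unif_policy card_ord.
  by rewrite sumr_const card_ord -mulrnAr invmuln // mulr1.
have valle : forall i pi, is_policy pi -> value (mk_env d0 id nu i) pi <= 1.
  move=> i pi hp; rewrite valE -[X in _ <= X]d0sum; apply: ler_sum => x _.
  rewrite /d0 /=; apply: ler_piMr; first by rewrite invr_ge0 ler0n.
  case: (hp x) => hge <-; rewrite (bigD1 x) //= lerDl sumr_ge0 //.
split.
- split=> // [j|j]; first by rewrite big_pred1_eq.
  split=> // y /=; rewrite /nu; case: (eqVneq y j) => // _; by rewrite /= mulr0n eqxx.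
- exact: wf.
- move=> i; exists (fbk (mk_env d0 id nu i) ord0 ord0).
  split; first by split=> // r; case: (wf i) => _ _; apply.
  move=> Psi hPsi.
  suff H : assumption2_with (mk_env d0 id nu i)
            (fbk (mk_env d0 id nu i) ord0 ord0) Psi (4%:R / 5%:R).
    split=> //; exists (4%:R / 5%:R); split=> //.
    by rewrite divr_gt0 ?ltr0n.
  move=> pistar hps hopt psistar hpsi hD.
  have V1 : 1 <= value (mk_env d0 id nu i) pistar by rewrite -(val0 i) hopt.
  have D1 : 1 <= Delta (fbk (mk_env d0 id nu i) ord0 ord0) psistar.
    apply: le_trans (hD _ (hPsi i)).
    rewrite /Delta /block_ind /=.
    under [X in _ - X]eq_bigr => y _ do rewrite fbkF.
    rewrite /nu sumIl eqxx big1 ?subr0 // => y _.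
    by case: (eqVneq y i) => [|_]; rewrite ?eqxx /= ?mulr0n ?mulr0 ?mul0r.
  rewrite valu.
  set V := value _ _ in V1 *; set D := Delta _ _ in D1 *.
  have -> : (10%:R : R)^-1 = 1/10 by rewrite div1r.
  nra.
- move=> i y; rewrite /ymarginal /unif_policy card_ord /=.
  under eq_bigr => x _ do under eq_bigr => a _ do rewrite big_bool /= fbkF.
  rewrite /nu sumI1r mulr1.
  have inner : forall x : 'I_10, \sum_a (10%:R)^-1 * ((a == x)%:R * (y == i)%:R
       + (1 - (a == x)%:R) * ((9%:R)^-1 * (y != i)%:R)) = (10%:R)^-1 :> R.
    move=> x; rewrite -mulr_sumr big_split /= -!mulr_suml sumI1 mul1r sumrB sumI1.
    rewrite sumr_const card_ord (_ : 1 *+ 10 - 1 = 9%:R :> R); last first.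
      by rewrite -[1 *+ 10]/(10%:R) (_ : 10%:R = 9%:R + 1 :> R) ?addrK // -natr1.
    rewrite mulrA mulfV // mul1r.
    by case: (y == i); rewrite /= ?addr0 ?add0r ?mulr1.
  under eq_bigr => x _ do rewrite inner.
  by rewrite /d0 -mulr_sumr sumr_const card_ord invmuln // mulr1.
- move=> psi hpsi.
  have [i _ Hmin] := @arg_minP _ R 'I_10 ord0 predT psi isT.
  set M := (9%:R)^-1 * \sum_y (y != i)%:R * psi y.
  have hM : psi i <= M.
    rewrite /M -[psi i]mul1r -[1 in X in X <= _](mulVf h9) -mulrA ler_wpM2l ?invr_ge0 ?ler0n //.
    rewrite -(sumNI R i) mulr_suml ler_sum // => y _.
    by case: (y != i); rewrite ?mul1r ?mul0r ?Hmin.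
  have inner : forall x a, \sum_(r : bool) rprob (mk_env d0 id nu i) x a r *
      \sum_y fbk (mk_env d0 id nu i) x a r y * psi y
      = (a == x)%:R * psi i + (1 - (a == x)%:R) * M.
    move=> x a; rewrite big_bool /= /nu sumIl; congr (_ + _ * _).
    under eq_bigr => y _ do rewrite fbkF mulrC mulrA mulrC.
    by rewrite /M mulr_sumr; apply: eq_bigr => y _; ring.
  have inle : forall x a : 'I_10, (a == x)%:R * psi i + (1 - (a == x)%:R) * M <= M.
    by move=> x a; case: (a == x); rewrite /= ?mul1r ?subrr ?mul0r ?addr0 ?subr0 ?mul0r ?add0r ?mul1r.
  pose nxt (x : 'I_10) : 'I_10 := if x == ord0 then Ordinal (isT : (1 < 10)%N) else ord0.
  have nxtne : forall x, (nxt x == x) = false.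
    move=> x; rewrite /nxt; case: (eqVneq x ord0) => [->|hx] //.
    by apply/negbTE; rewrite eq_sym.
  pose pih : 'I_10 -> 'I_10 -> R := fun x a => (a == nxt x)%:R.
  have dvE : forall pi, dvalue (mk_env d0 id nu i) pi psi =
      \sum_x (10%:R)^-1 * \sum_a pi x a * ((a == x)%:R * psi i + (1 - (a == x)%:R) * M).
    by move=> pi; apply: eq_bigr => x _; congr (_ * _); apply: eq_bigr => a _; rewrite inner.
  have dvh : dvalue (mk_env d0 id nu i) pih psi = M.
    rewrite dvE; under eq_bigr => x _ do rewrite /pih sumIl nxtne /= mul0r add0r subr0 mul1r.
    by rewrite -mulr_suml d0sum mul1r.
  exists i, pih; split=> //.
  + by move=> x; split=> [t|]; rewrite /pih ?ler0n // sumI1.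
  + move=> pi hp; rewrite dvh dvE.
    rewrite [X in _ <= X](_ : M = \sum_(x < 10) (10%:R)^-1 * M); last first.
      by rewrite -mulr_suml d0sum mul1r.
    apply: ler_sum => x _; rewrite ler_wpM2l ?invr_ge0 ?ler0n //.
    case: (hp x) => hge hs.
    rewrite [X in _ <= X](_ : M = \sum_a pi x a * M); last first.
      by rewrite -mulr_suml hs mul1r.
    by apply: ler_sum => a _; rewrite ler_wpM2l.
  + rewrite valE big1 // => x _; by rewrite /pih eq_sym nxtne mulr0.
  + by exists pi0; split.
  + exact: valle.
Qed.
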